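(* Let $G$ be a bounded metric operator on $\mathcal H$ and $S$ a closed densely defined operator in $\mathcal H$. Define $K$ on $D(K)=G^{1/2}D(S)$ by $K\xi=G^{1/2}SG^{-1/2}\xi$. Then $K$ is densely defined and $K^*=G^{-1/2}S^*G^{1/2}$, where the latter operator has its natural domain $\{\eta\in\mathcal H: G^{1/2}\eta\in D(S^* ),\ S^*G^{1/2}\eta\in D(G^{-1/2})\}$.
   Context: A metric operator on a Hilbert space $\mathcal H$ is a self-adjoint operator $G$ with $\langle G\xi,\xi\rangle>0$ for all nonzero $\xi\in D(G)$; $G^{-1/2}$ denotes the (possibly unbounded) inverse of $G^{1/2}$, with domain the range of $G^{1/2}$. $S^*$ denotes the Hilbert space adjoint in $\mathcal H$. *)

(* Defs.v *)
(* Complex Hilbert spaces are not available in the installed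
   libraries, so they are axiomatised here (as hypotheses, i.e. Props) over a
   numeric closed field C whose real part is Dedekind complete (so C is the
   field of complex numbers). *)
From HB Require Import structures.
From mathcomp Require Import all_boot all_order all_algebra.
From Stdlib Require Import ClassicalEpsilon.
Set Implicit Arguments. Unset Strict Implicit. Unset Printing Implicit Defensive.
Import Order.TTheory GRing.Theory Num.Theory.
Local Open Scope ring_scope.

Definition C_complete (C : numClosedFieldType) : Prop :=
  forall A : C -> Prop,
    (forall x, A x -> x \is Num.real) -> (exists x, A x) ->
    (exists M, forall x, A x -> x <= M) ->
    exists s, (forall x, A x -> x <= s) /\
              (forall M, (forall x, A x -> x <= M) -> s <= M).

Section Hilbert.
Variables (C : numClosedFieldType) (H : lmodType C) (ip : H -> H -> C).

Record inner_product : Prop := {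
  ip_linl : forall a x y z, ip (a *: x + y) z = a * ip x z + ip y z;
  ip_conj : forall x y, ip y x = (ip x y)^*;
  ip_pos  : forall x, 0 <= ip x x;
  ip_def  : forall x, ip x x = 0 -> x = 0 }.

Definition hnorm (x : H) : C := sqrtC (ip x x).

Definition converges (u : nat -> H) (l : H) : Prop :=
  forall e : C, 0 < e -> exists N, forall n, (N <= n)%N -> hnorm (u n - l) < e.

Definition cauchy (u : nat -> H) : Prop :=
  forall e : C, 0 < e -> exists N, forall n m, (N <= n)%N -> (N <= m)%N ->
    hnorm (u n - u m) < e.

Definition complete : Prop := forall u, cauchy u -> exists l, converges u l.

Definition hilbert : Prop := C_complete C /\ inner_product /\ complete.

Definition dense (D : H -> Prop) : Prop :=
  forall x (e : C), 0 < e -> exists y, D y /\ hnorm (x - y) < e.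

Record op := mkOp { dom : H -> Prop; app : H -> H }.

Definition linear_op (T : op) : Prop :=
  dom T 0 /\
  forall a x y, dom T x -> dom T y ->
    dom T (a *: x + y) /\ app T (a *: x + y) = a *: app T x + app T y.

Definition densely_defined (T : op) : Prop := dense (dom T).

Definition closed_op (T : op) : Prop :=
  forall (u : nat -> H) l m, (forall n, dom T (u n)) -> converges u l ->
    converges (fun n => app T (u n)) m -> dom T l /\ app T l = m.

Definition adjoint (T : op) : op :=
  mkOp (fun eta => exists zeta, forall xi, dom T xi -> ip (app T xi) eta = ip xi zeta)
       (fun eta => epsilon (inhabits (0 : H))
          (fun zeta => forall xi, dom T xi -> ip (app T xi) eta = ip xi zeta)).

Definition op_of_fun (f : H -> H) : op := mkOp (fun _ => True) f.

Definition inv_op (f : H -> H) : op :=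
  mkOp (fun y => exists x, f x = y)
       (fun y => epsilon (inhabits (0 : H)) (fun x => f x = y)).

Definition comp_op (A B : op) : op :=
  mkOp (fun x => dom B x /\ dom A (app B x)) (fun x => app A (app B x)).

Definition op_eq (A B : op) : Prop :=
  (forall x, dom A x <-> dom B x) /\ (forall x, dom A x -> app A x = app B x).

Definition bounded_linear (f : H -> H) : Prop :=
  (forall a x y, f (a *: x + y) = a *: f x + f y) /\
  exists M : C, forall x, hnorm (f x) <= M * hnorm x.

Definition selfadjoint_bounded (f : H -> H) : Prop :=
  bounded_linear f /\ forall x y, ip (f x) y = ip x (f y).

Definition bounded_metric (G : H -> H) : Prop :=
  selfadjoint_bounded G /\ forall x, x != 0 -> 0 < ip (G x) x.

Definition is_sqrt (G R : H -> H) : Prop :=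
  selfadjoint_bounded R /\ (forall x, 0 <= ip (R x) x) /\ (forall x, R (R x) = G x).

Definition conj_op (R : H -> H) (S : op) : op :=
  mkOp (fun xi => exists x, dom S x /\ xi = R x)
       (fun xi => R (app S (app (inv_op R) xi))).

End Hilbert.

(* Main.v *)
Require Import Defs.
From mathcomp Require Import all_boot all_order all_algebra.
From Stdlib Require Import ClassicalEpsilon Classical.
From mathcomp Require Import ring.
Set Implicit Arguments. Unset Strict Implicit. Unset Printing Implicit Defensive.
Import Order.TTheory GRing.Theory Num.Theory.
Local Open Scope ring_scope.

Section Basics.
Variables (C : numClosedFieldType) (H : lmodType C) (ip : H -> H -> C).
Hypothesis IP : inner_product ip.

Lemma ip0l z : ip 0 z = 0.
Proof.
have h := ip_linl IP 1 0 0 z; rewrite scale1r addr0 mul1r in h.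
have := congr1 (fun t => t - ip 0 z) h; rewrite addrK subrr => ->; done.
Qed.

Lemma ipDl x y z : ip (x + y) z = ip x z + ip y z.
Proof. by have := ip_linl IP 1 x y z; rewrite scale1r mul1r. Qed.

Lemma ipZl a x z : ip (a *: x) z = a * ip x z.
Proof. by have := ip_linl IP a x 0 z; rewrite addr0 ip0l addr0. Qed.

Lemma ipNl x z : ip (- x) z = - ip x z.
Proof. by rewrite -scaleN1r ipZl mulN1r. Qed.

Lemma ipBl x y z : ip (x - y) z = ip x z - ip y z.
Proof. by rewrite ipDl ipNl. Qed.

Lemma ipDr x y z : ip z (x + y) = ip z x + ip z y.
Proof. by rewrite (ip_conj IP (x + y)) (ip_conj IP x) (ip_conj IP y) ipDl rmorphD. Qed.

Lemma ipZr a x z : ip z (a *: x) = a^* * ip z x.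
Proof. by rewrite (ip_conj IP (a *: x)) (ip_conj IP x) ipZl rmorphM. Qed.

Lemma ipBr x y z : ip z (x - y) = ip z x - ip z y.
Proof. by rewrite (ip_conj IP (x - y)) (ip_conj IP x) (ip_conj IP y) ipBl rmorphB. Qed.

Lemma ip0r z : ip z 0 = 0.
Proof. by rewrite (ip_conj IP 0) ip0l rmorph0. Qed.

Lemma ip_ge0 x : 0 <= ip x x. Proof. exact: (ip_pos IP). Qed.

Lemma ip_real x : ip x x \is Num.real. Proof. exact: ger0_real (ip_ge0 x). Qed.

Lemma ip_sub x y : ip (x - y) (x - y) = ip x x - ip x y - ip y x + ip y y.
Proof. rewrite ipBl !ipBr; ring. Qed.

Lemma dist_sym u v : ip (u - v) (u - v) = ip (v - u) (v - u).
Proof. by rewrite !ip_sub; ring. Qed.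

Lemma ip_add x y : ip (x + y) (x + y) = ip x x + ip x y + ip y x + ip y y.
Proof. by rewrite ipDl !ipDr !addrA. Qed.

Lemma ip_par x y : ip (x + y) (x + y) <= 2 * ip x x + 2 * ip y y.
Proof.
have e : ip (x + y) (x + y) + ip (x - y) (x - y) = 2 * ip x x + 2 * ip y y.
  rewrite ip_add ip_sub; ring.
rewrite -e lerDl; exact: ip_ge0.
Qed.

Lemma hnorm_lt u e : 0 < e -> (hnorm ip u < e) = (ip u u < e ^+ 2).
Proof.
move=> e0; rewrite /hnorm -{1}(sqrCK (ltW e0)) ltr_sqrtC // ?qualifE /= ?ip_ge0 //.
by rewrite exprn_ge0 // ltW.
Qed.
End Basics.

Section Part2.
Variables (C : numClosedFieldType) (H : lmodType C) (ip : H -> H -> C).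
Hypothesis IP : inner_product ip.

Lemma dense_orth (D : H -> Prop) w : dense ip D -> (forall x, D x -> ip x w = 0) -> w = 0.
Proof.
move=> Dd Dw; apply: NNPP => wn0.
have wpos : 0 < ip w w.
  rewrite lt_def ip_ge0 // andbT; apply/eqP => h; exact: wn0 (ip_def IP h).
have e0 : 0 < hnorm ip w by rewrite /hnorm sqrtC_gt0.
have [y [Dy]] := Dd w _ e0.
have h1 : ip y w = 0 := Dw y Dy.
rewrite hnorm_lt // /hnorm sqrtCK ip_sub // (ip_conj IP y w) h1 conjC0.
rewrite !subr0 -subr_gt0 opprD addrA subrr add0r oppr_gt0 => h.
by have := ip_ge0 IP y; rewrite (lt_geF h).
Qed.

Lemma dense_uniq (D : H -> Prop) w1 w2 : dense ip D ->
  (forall x, D x -> ip x w1 = ip x w2) -> w1 = w2.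
Proof.
move=> Dd h; apply/eqP; rewrite -subr_eq0; apply/eqP; apply: (dense_orth Dd).
by move=> x Dx; rewrite ipBr // h // subrr.
Qed.

Variables (R : H -> H) (S : op H).
Hypothesis Rsa : forall x y, ip (R x) y = ip x (R y).
Hypothesis Rinj : injective R.
Hypothesis Sd : dense ip (dom S).

Lemma appK x : app (conj_op R S) (R x) = R (app S x).
Proof.
rewrite /=; congr (R (app S _)); apply: Rinj.
exact: (epsilon_spec (inhabits 0) (fun x' => R x' = R x) (ex_intro _ x erefl)).
Qed.

Lemma adjK_spec eta zeta : (forall xi, dom (conj_op R S) xi ->
    ip (app (conj_op R S) xi) eta = ip xi zeta) <->
  (forall x, dom S x -> ip (app S x) (R eta) = ip x (R zeta)).
Proof.
split.
  move=> h x Sx; rewrite -!Rsa -appK; apply: h; by exists x.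
move=> h xi [x [Sx ->]]; rewrite appK !Rsa; exact: h.
Qed.

Lemma part2 : op_eq (adjoint ip (conj_op R S))
        (comp_op (inv_op R) (comp_op (adjoint ip S) (op_of_fun R))).
Proof.
have keyd : forall eta, dom (adjoint ip (conj_op R S)) eta ->
    dom (adjoint ip S) (R eta) /\
    R (app (adjoint ip (conj_op R S)) eta) = app (adjoint ip S) (R eta).
  move=> eta [zeta hz].
  have hz' := proj1 (adjK_spec eta zeta) hz.
  have dS : dom (adjoint ip S) (R eta) by exists (R zeta).
  split => //.
  have sp1 := epsilon_spec (inhabits 0) (fun z => forall xi, dom (conj_op R S) xi ->
    ip (app (conj_op R S) xi) eta = ip xi z) (ex_intro _ zeta hz).
  have sp2 := epsilon_spec (inhabits 0) (fun z => forall xi, dom S xi ->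
    ip (app S xi) (R eta) = ip xi z) dS.
  have s1 := proj1 (adjK_spec _ _) sp1.
  apply: (dense_uniq Sd) => x Sx; rewrite -s1 // sp2 //.
split.
  move=> eta; split.
    move=> d; have [d1 d2] := keyd eta d; split; first by split.
    by exists (app (adjoint ip (conj_op R S)) eta).
  move=> [[_ d1] [x hx]].
  exists x; apply/(adjK_spec eta x) => y Sy.
  have sp2 := epsilon_spec (inhabits 0) (fun z => forall xi, dom S xi ->
    ip (app S xi) (R eta) = ip xi z) d1.
  by rewrite hx sp2.
move=> eta d; have [d1 d2] := keyd eta d; apply: Rinj.
rewrite d2 /=.
have ex : exists x, R x = app (adjoint ip S) (R eta) by exists (app (adjoint ip (conj_op R S)) eta).
by rewrite (epsilon_spec (inhabits 0) (fun x => R x = app (adjoint ip S) (R eta)) ex).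
Qed.
End Part2.

Section Part1.
Variables (C : numClosedFieldType) (H : lmodType C) (ip : H -> H -> C).
Hypothesis IP : inner_product ip.
Hypothesis Ccomp : C_complete C.
Hypothesis Hcomp : complete ip.
Variables (R : H -> H) (B : C).
Hypothesis Rlin : forall a x y, R (a *: x + y) = a *: R x + R y.
Hypothesis Rsa : forall x y, ip (R x) y = ip x (R y).
Hypothesis Gpos : forall x, x != 0 -> 0 < ip (R (R x)) x.
Hypothesis B0 : 0 <= B.
Hypothesis RB : forall x, ip (R x) (R x) <= B * ip x x.

Lemma R0 : R 0 = 0.
Proof.
have := Rlin 1 0 0; rewrite !scale1r addr0 => h.
have := congr1 (fun t => t - R 0) h; by rewrite addrK subrr => /esym.
Qed.
Lemma RD x y : R (x + y) = R x + R y.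
Proof. by have := Rlin 1 x y; rewrite !scale1r. Qed.
Lemma RZ a x : R (a *: x) = a *: R x.
Proof. by have := Rlin a x 0; rewrite !addr0 R0 addr0. Qed.
Lemma RN x : R (- x) = - R x.
Proof. by rewrite -scaleN1r RZ scaleN1r. Qed.
Lemma RB' x y : R (x - y) = R x - R y.
Proof. by rewrite RD RN. Qed.

Let c : C := (B + 1)^-1.
Lemma B1pos : 0 < B + 1.
Proof. by apply: (le_lt_trans B0); rewrite ltrDl ltr01. Qed.
Lemma c_pos : 0 < c.
Proof. by rewrite /c invr_gt0 B1pos. Qed.
Lemma c_conj : c^* = c.
Proof. exact: geC0_conj (ltW c_pos). Qed.
Lemma cB1 : c * B <= 1.
Proof. by rewrite mulrC ler_pdivrMr ?B1pos // mul1r lerDl ler01. Qed.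

Let T x := x - c *: R (R x).
Let r k := iter k T.

Lemma Tsa u v : ip (T u) v = ip u (T v).
Proof. by rewrite /T ipBl // ipBr // ipZl // ipZr // c_conj !Rsa. Qed.

Lemma TR x : T (R x) = R (T x).
Proof. by rewrite /T RB' RZ. Qed.

Lemma iterTR k x : iter k T (R x) = R (iter k T x).
Proof. by elim: k => //= k ->; rewrite TR. Qed.

Lemma iterTsa k u v : ip (iter k T u) v = ip u (iter k T v).
Proof. elim: k u v => //= k IH u v; by rewrite Tsa IH -iterSr. Qed.

Lemma Tpos w : 0 <= ip (T w) w.
Proof.
rewrite /T ipBl // ipZl // Rsa subr_ge0.
apply: (le_trans (ler_wpM2l (ltW c_pos) (RB w))).
by rewrite mulrA -{2}(mul1r (ip w w)) ler_wpM2r ?cB1 // ip_ge0.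
Qed.

Lemma iter_pos j v : 0 <= ip (iter j T v) v.
Proof.
rewrite -[j](odd_double_half) -addnn.
move: (j./2) => h.
case: (odd j).
  rewrite add1n iterS iterD -iterS iterSr iterTsa; exact: Tpos.
rewrite add0n iterD iterTsa; exact: ip_ge0.
Qed.

Variable y : H.
Let a j := ip (iter j T y) y.

Lemma a_pos j : 0 <= a j.
Proof. exact: iter_pos. Qed.

Lemma a_step j : a j.+1 <= a j.
Proof.
rewrite /a iterS {1}/T ipBl // ipZl // Rsa -iterTR.
by rewrite gerDl oppr_le0 mulr_ge0 ?(ltW c_pos) ?iter_pos.
Qed.

Lemma a_mono n m : (n <= m)%N -> a m <= a n.
Proof.
elim: m => [|m IH]; first by rewrite leqn0 => /eqP ->.
rewrite leq_eqVlt => /orP [/eqP -> //|]; rewrite ltnS => /IH.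
exact: le_trans (a_step m).
Qed.

Lemma r_ip k m : ip (iter k T y) (iter m T y) = a (k + m).
Proof. by rewrite -iterTsa -iterD addnC. Qed.

Lemma r_dist k m : (k <= m)%N ->
  ip (iter k T y - iter m T y) (iter k T y - iter m T y) <= a (k + k) - a (m + m).
Proof.
move=> km; rewrite ip_sub // !r_ip.
have hm : a (m + m) <= a (k + m) by apply: a_mono; rewrite leq_add2r.
rewrite -subr_ge0 (_ : _ - _ = (a (k + m) - a (m + m)) + (a (k + m) - a (m + m))); last first.
  by rewrite (addnC m k); ring.
by rewrite addr_ge0 // subr_ge0.
Qed.


Lemma a_inf : exists L, L \is Num.real /\ (forall j, L <= a j) /\
  (forall e, 0 < e -> exists j, a j < L + e).
Proof.
have h1 : forall x, (exists j, x = - a j) -> x \is Num.real.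
  move=> x [j ->]; rewrite realN; exact: ger0_real (a_pos j).
have h2 : exists x, exists j, x = - a j by exists (- a 0), 0%N.
have h3 : exists M, forall x, (exists j, x = - a j) -> x <= M.
  exists 0 => x [j ->]; rewrite oppr_le0; exact: a_pos.
have [s [s1 s2]] := @Ccomp (fun t => exists j, t = - a j) h1 h2 h3.
have sreal : s \is Num.real.
  apply: ler0_real; apply: s2 => x [j ->]; by rewrite oppr_le0 a_pos.
exists (- s); split; first by rewrite realN.
split.
  move=> j; rewrite lerNl; apply: s1; by exists j.
move=> e e0; apply: NNPP => hne.
have : s <= s - e.
  apply: s2 => x [j ->].
  have : ~~ (a j < - s + e) by apply/negP => h; apply: hne; exists j.
  rewrite real_ltNge ?negbK; first by rewrite lerNl opprB addrC.
    exact: ger0_real (a_pos j).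
  by rewrite rpredD ?realN // ger0_real // ltW.
by rewrite lerDl oppr_ge0 (lt_geF e0).
Qed.

Lemma r_cauchy : cauchy ip (fun n => iter n T y).
Proof.
have [L [Lr [Llo Lap]]] := a_inf.
move=> e e0.
have e20 : 0 < e ^+ 2 by rewrite exprn_gt0.
have [j hj] := Lap _ e20.
exists j => n m jn jm.
rewrite hnorm_lt //.
wlog nm : n m jn jm / (n <= m)%N.
  move=> W; case: (leqP n m) => [|/ltnW] h; first exact: W.
  rewrite dist_sym //; exact: W.
apply: le_lt_trans (r_dist nm) _.
have h : a (n + n) - a (m + m) <= a j - L.
  apply: lerB; last exact: Llo.
  apply: a_mono; apply: (leq_trans jn); exact: leq_addr.
apply: le_lt_trans h _; by rewrite ltrBlDl.
Qed.

Lemma RR_bound w : ip (R (R w)) (R (R w)) <= B ^+ 2 * ip w w.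
Proof.
apply: le_trans (RB _) _; rewrite expr2 -mulrA; apply: ler_wpM2l => //; exact: RB.
Qed.

Let K := 2 * B ^+ 2 + 8 * (B + 1) ^+ 2.
Lemma K_pos : 0 < K.
Proof.
rewrite /K; apply: ltr_wpDl; first by rewrite mulr_ge0 ?exprn_ge0 ?ler0n.
by rewrite mulr_gt0 ?ltr0n // exprn_gt0 // B1pos.
Qed.

Lemma r_lim_zero l : converges ip (fun n => iter n T y) l -> l = 0.
Proof.
move=> hl.
have key : forall d, 0 < d -> ip (R (R l)) (R (R l)) <= K * d.
  move=> d d0.
  have sd : 0 < sqrtC d by rewrite sqrtC_gt0.
  have [N hN] := hl (sqrtC d) sd.
  have hN' : forall n, (N <= n)%N -> ip (iter n T y - l) (iter n T y - l) < d.
    by move=> n /hN; rewrite hnorm_lt ?sqrtC_gt0 // sqrtCK.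
  have h1 := hN' N (leqnn N). have h2 := hN' N.+1 (leqnSn N).
  move: h1 h2; rewrite iterS; set u := iter N T y => h1 h2.
  have eRR : R (R u) = (B + 1) *: (u - T u).
    rewrite /T opprB addrCA subrr addr0 scalerA /c mulrV ?scale1r //.
    exact: unitf_gt0 B1pos.
  have eL : R (R l) = R (R (l - u)) + R (R u) by rewrite !RB' subrK.
  rewrite eL; apply: le_trans (ip_par IP _ _) _.
  have b1 : ip (R (R (l - u))) (R (R (l - u))) <= B ^+ 2 * d.
    apply: le_trans (RR_bound _) _; apply: ler_wpM2l; first exact: exprn_ge0.
    rewrite dist_sym //; exact: ltW.
  have b2 : ip (R (R u)) (R (R u)) <= (B + 1) ^+ 2 * (4 * d).
    rewrite eRR ipZl // ipZr // (geC0_conj (ltW B1pos)) mulrA -expr2.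
    apply: ler_wpM2l; first by rewrite exprn_ge0 // ltW // B1pos.
    have e3 : u - T u = (u - l) + (l - T u) by rewrite addrA subrK.
    rewrite e3; apply: le_trans (ip_par IP _ _) _.
    have -> : 4 * d = 2 * d + 2 * d by ring.
    apply: lerD; apply: ler_wpM2l; rewrite ?ler0n //; apply: ltW => //.
    by rewrite dist_sym.
  apply: le_trans (lerD (ler_wpM2l _ b1) (ler_wpM2l _ b2)) _; rewrite ?ler0n //.
  have -> : 2 * (B ^+ 2 * d) + 2 * ((B + 1) ^+ 2 * (4 * d)) = K * d by rewrite /K; ring.
  exact: lexx.
have GL : R (R l) = 0.
  apply: NNPP => ne.
  set v := ip (R (R l)) (R (R l)).
  have vpos : 0 < v.
    rewrite lt_def ip_ge0 // andbT; apply/eqP => h; exact: ne (ip_def IP h).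
  have Kpos := K_pos.
  have dp : 0 < v / (2 * K) by rewrite divr_gt0 // mulr_gt0 // ltr0n.
  have := key _ dp.
  have -> : K * (v / (2 * K)) = v / 2.
    by field; exact: lt0r_neq0.
  rewrite -/v => h; have := ler_wpM2r (ler0n _ 2) h.
  rewrite divfK ?pnatr_eq0 //.
  have -> : v * 2%:R = v + v by ring.
  by rewrite gerDl (lt_geF vpos).
apply: NNPP => ne.
have := Gpos (introN eqP ne).
by rewrite GL ip0l // ltxx.
Qed.

Lemma range_dense e : 0 < e -> exists x, ip (y - R x) (y - R x) < e.
Proof.
move=> e0.
have [l hl] := Hcomp r_cauchy.
have l0 := r_lim_zero hl.
have se : 0 < sqrtC e by rewrite sqrtC_gt0.
have [N hN] := hl (sqrtC e) se.
have := hN N (leqnn N); rewrite hnorm_lt // sqrtCK l0 subr0.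
have [x ->] : exists x, iter N T y = y - R x.
  elim: (N) => [|n [x hx]]; first by exists 0; rewrite R0 subr0.
  exists (x + c *: R (iter n T y)); rewrite iterS {1}/T hx (RD x) RZ.
  by rewrite opprD addrA.
by move=> h; exists x.
Qed.
End Part1.

Lemma part1 (C : numClosedFieldType) (H : lmodType C) (ip : H -> H -> C)
  (IP : inner_product ip) (Ccomp : C_complete C) (Hcomp : complete ip)
  (R : H -> H) (B : C)
  (Rlin : forall a x y, R (a *: x + y) = a *: R x + R y)
  (Rsa : forall x y, ip (R x) y = ip x (R y))
  (Gpos : forall x, x != 0 -> 0 < ip (R (R x)) x)
  (B0 : 0 <= B) (RB : forall x, ip (R x) (R x) <= B * ip x x)
  (S : op H) (Sd : dense ip (dom S)) :
  dense ip (dom (conj_op R S)).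
Proof.
move=> x e e0.
set d := e ^+ 2 / 4%:R.
have d0 : 0 < d by rewrite divr_gt0 ?exprn_gt0 ?ltr0n.
have [z hz] := range_dense IP Ccomp Hcomp Rlin Rsa Gpos B0 RB x d0.
have B1 : 0 < B + 1 by apply: (le_lt_trans B0); rewrite ltrDl ltr01.
have d1 : 0 < d / (B + 1) by rewrite divr_gt0.
have sd1 : 0 < sqrtC (d / (B + 1)) by rewrite sqrtC_gt0.
have [s [Ss hs]] := Sd z _ sd1.
move: hs; rewrite hnorm_lt // sqrtCK => hs.
exists (R s); split; first by exists s.
rewrite hnorm_lt //.
have e1 : x - R s = (x - R z) + R (z - s).
  rewrite (RB' Rlin) addrA subrK //.
have b2 : ip (R (z - s)) (R (z - s)) < d.
  apply: le_lt_trans (RB _) _.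
  apply: le_lt_trans (_ : _ <= (B + 1) * ip (z - s) (z - s)) _.
    by rewrite ler_wpM2r ?ip_ge0 // lerDl ler01.
  by rewrite mulrC -ltr_pdivlMr.
rewrite e1; apply: le_lt_trans (ip_par IP _ _) _.
have -> : e ^+ 2 = 2 * d + 2 * d by rewrite /d; field.
by apply: ltrD; rewrite ltr_pM2l ?ltr0n.
Qed.

Theorem lemma3p5 (C : numClosedFieldType) (H : lmodType C) (ip : H -> H -> C)
  (Hhil : hilbert ip)
  (G R : H -> H) (HG : bounded_metric ip G) (HR : is_sqrt ip G R)
  (S : op H) (HSlin : linear_op S) (HSdense : densely_defined ip S)
  (HSclosed : closed_op ip S) :
  densely_defined ip (conj_op R S) /\
  op_eq (adjoint ip (conj_op R S))
        (comp_op (inv_op R) (comp_op (adjoint ip S) (op_of_fun R))).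
Proof.
case: Hhil => Ccomp [IP Hcomp].
case: HR => [[[Rlin [M hM]] Rsa] [_ RRG]].
case: HG => _ Gp.
have Gpos : forall x, x != 0 -> 0 < ip (R (R x)) x by move=> x /Gp; rewrite RRG.
set B := `|M| ^+ 2.
have B0 : 0 <= B by rewrite exprn_ge0.
have RB : forall x, ip (R x) (R x) <= B * ip x x.
  move=> x; have h := hM x.
  have h0 : 0 <= hnorm ip (R x) by rewrite /hnorm sqrtC_ge0 ip_ge0.
  have hx0 : 0 <= hnorm ip x by rewrite /hnorm sqrtC_ge0 ip_ge0.
  have Mh0 : 0 <= M * hnorm ip x := le_trans h0 h.
  have := lerXn2r 2 h0 Mh0 h.
  rewrite -(ger0_norm Mh0) normrM (ger0_norm hx0) exprMn /hnorm !sqrtCK //.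
have Rinj : injective R.
  move=> x1 x2 e; apply/eqP; rewrite -subr_eq0; apply/negPn/negP => ne.
  have := Gpos _ ne; rewrite (RB' Rlin) e subrr !(R0 Rlin) ip0l //.
  by rewrite ltxx.
split.
  exact: (part1 IP Ccomp Hcomp Rlin Rsa Gpos B0 RB HSdense).
exact: (@part2 _ _ _ IP R S Rsa Rinj HSdense).
Qed.
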